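(* Let $F$ be a nontrivial finite group, $\tfrac12<p<1$, $\lambda=\frac{p}{1-p}$, and $\alpha=\frac{\log|F|}{\log\lambda}$. Then there exist constants $m_0$ and $0<c\le C$ depending only on $p$ and $|F|$ such that for every integer $m\ge m_0$, \[\frac{c}{m^{\alpha}}\le\sum_{a=1}^{\infty}|F|^{-a}\Big(1-\frac{\lambda-1}{\lambda^a-1}\Big)^m\le\frac{C}{m^{\alpha}}.\] *)

(* Defs.v *)
From HB Require Import structures.
From mathcomp Require Import all_boot all_order all_algebra all_fingroup.
From mathcomp Require Import all_classical all_reals all_analysis.
Set Implicit Arguments. Unset Strict Implicit. Unset Printing Implicit Defensive.
Import Order.TTheory GRing.Theory Num.Theory.
Local Open Scope ring_scope.

Definition lam {R : realType} (p : R) : R := p / (1 - p).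

Definition alpha {R : realType} (n : nat) (p : R) : R := ln (n%:R) / ln (lam p).

Definition summand {R : realType} (n : nat) (p : R) (m a : nat) : R :=
  (n%:R ^- a) * (1 - (lam p - 1) / (lam p ^+ a - 1)) ^+ m.

(* Main.v *)
Require Import Defs.
From HB Require Import structures.
From mathcomp Require Import all_boot all_order all_algebra all_fingroup.
From mathcomp Require Import all_classical all_reals all_analysis.
Import Order.TTheory GRing.Theory Num.Theory.
Local Open Scope ring_scope.
From mathcomp Require Import ring lra zify.

Lemma bern {R : realType} (y : R) m : -1 <= y -> 1 + m%:R * y <= (1 + y) ^+ m.
Proof.
move=> hy; elim: m => [|m IH]; first by rewrite mul0r addr0 expr0.
rewrite exprSr.
have h1 : 0 <= 1 + y by lra.
apply: le_trans (ler_wpM2r h1 IH).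
rewrite -natr1.
have hm : 0 <= (m%:R : R) by [].
nra.
Qed.

Lemma geom_sum {R : realType} (x : R) a M : x != 1 ->
  \sum_(a <= i < a + M) x ^+ i = x ^+ a * (x ^+ M - 1) / (x - 1).
Proof.
move=> hx; have hx1 : x - 1 != 0 by rewrite subr_eq0.
elim: M => [|M IH]; first by rewrite addn0 big_geq // expr0 subrr mulr0 mul0r.
rewrite addnS big_nat_recr /= ?leq_addr // IH.
rewrite exprD exprS; field; exact: hx1.
Qed.

Lemma exists_pow {R : realType} (L y : R) : 1 < L -> 1 <= y ->
  exists a : nat, L ^+ a <= y < L ^+ a.+1.
Proof.
move=> hL hy.
have hex : exists a : nat, y < L ^+ a.
  have h0 : 0 <= (y - 1) / (L - 1) by apply: divr_ge0; lra.
  have hb := archi_boundP h0.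
  set b := Num.bound _ in hb.
  exists b.
  have hB := @bern _ (L - 1) b (_ : -1 <= L - 1).
  have e1 : 1 + (L - 1) = L by ring.
  rewrite e1 in hB; have {}hB := hB ltac:(lra).
  apply: lt_le_trans hB.
  have : (y - 1) < b%:R * (L - 1) by rewrite -ltr_pdivrMr; lra.
  lra.
case: (ex_minnP hex) => a ha hmin.
case: a ha hmin => [|a] ha hmin; first by rewrite expr0 in ha; lra.
exists a; rewrite ha andbT.
case: (leP (L ^+ a) y) => // hlt.
have := hmin a hlt; by rewrite ltnn.
Qed.

Lemma L_gt1 {R : realType} {p : R} : 1 / 2 < p -> p < 1 -> 1 < lam p.
Proof. move=> h1 h2; rewrite /lam ltr_pdivlMr; lra. Qed.

Lemma alpha_gt0 {R : realType} n (p : R) : (1 < n)%N -> 1 / 2 < p -> p < 1 ->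
  0 < alpha n p.
Proof.
move=> hn h1 h2; rewrite /alpha; apply: divr_gt0; apply: ln_gt0; last exact: L_gt1.
by rewrite (ltr_nat R 1 n).
Qed.

Lemma pow_alpha {R : realType} n (p : R) : (1 < n)%N -> 1 / 2 < p -> p < 1 ->
  forall a, (n%:R : R) ^+ a = (lam p ^+ a) `^ alpha n p.
Proof.
move=> hn h1 h2 a; have hL := L_gt1 h1 h2.
have hLa : lam p `^ alpha n p = n%:R.
  rewrite /powR gt_eqF; last lra.
  rewrite /alpha divfK; last by rewrite gt_eqF // ln_gt0.
  by rewrite lnK // posrE (ltr_nat R 0 n) ltnW.
have hL0 : 0 <= lam p by lra.
rewrite -(powR_mulrn a hL0).
by rewrite -powRrM mulrC powRrM hLa powR_mulrn.
Qed.

Lemma x_bounds {R : realType} (L : R) i : 1 < L -> (0 < i)%N ->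
  [/\ 0 < (L - 1) / L ^+ i, (L - 1) / L ^+ i <= (L - 1) / (L ^+ i - 1)
    & (L - 1) / (L ^+ i - 1) <= 1].
Proof.
move=> hL hi.
have hP : L <= L ^+ i.
  case: i hi => // i _; rewrite exprS -[X in X <= _]mulr1.
  apply: ler_wpM2l; [lra | exact: exprn_ege1 (ltW hL)].
split.
- apply: divr_gt0; lra.
- rewrite ler_pdivrMr; last lra.
  rewrite mulrAC ler_pdivlMr; last lra.
  nra.
- rewrite ler_pdivrMr; lra.
Qed.

Lemma lower_term {R : realType} n (p : R) : (1 < n)%N -> 1 / 2 < p -> p < 1 ->
  forall m, (0 < m)%N -> exists b, (0 < b)%N /\
  ((2 * lam p * lam p) `^ alpha n p)^-1 / 2 / (m%:R `^ alpha n p)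
    <= summand n p m b.
Proof.
move=> hn h1 h2 m hm0.
have hpa := @pow_alpha _ n p hn h1 h2.
have hal := @alpha_gt0 _ n p hn h1 h2.
have hL := L_gt1 h1 h2.
move: hpa hal hL; set L := lam p; set al := alpha n p => hpa hal hL.
have hm : 1 <= (m%:R : R) by rewrite (ler_nat R 1 m).
have [|a /andP[ha1 ha2]] := @exists_pow _ L (2 * L * m%:R) hL; first nra.
exists a.+1; split => //.
have [hx0 hx1 hx2] := @x_bounds _ L a.+1 hL (ltn0Sn a).
move: hx0 hx1 hx2 ha2; set P := L ^+ a.+1 => hx0 hx1 hx2 hP1.
have hP2 : P <= L * (2 * L * m%:R) by rewrite /P exprS ler_wpM2l //; lra.
have hP0 : 1 < P by nra.
have hmx : m%:R * ((L - 1) / (P - 1)) <= 1 / 2.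
  rewrite mulrA ler_pdivrMr; last lra.
  nra.
have hB := @bern _ (- ((L - 1) / (P - 1))) m.
have {}hB : 1 / 2 <= (1 - (L - 1) / (P - 1)) ^+ m.
  apply: le_trans (hB _); nra.
rewrite /summand -/L -/P.
have hK : 0 < (2 * L * L) `^ al by apply: powR_gt0; nra.
have hQ : 0 < (m%:R : R) `^ al by apply: powR_gt0; nra.
have hNP : (n%:R : R) ^+ a.+1 <= (2 * L * L) `^ al * (m%:R : R) `^ al.
  rewrite hpa -/P -powRM; [|nra|nra].
  apply: ge0_ler_powR; rewrite ?nnegrE; [lra|lra|nra|nra].
have hNP0 : 0 < (n%:R : R) ^+ a.+1 by apply: exprn_gt0; rewrite (ltr_nat R 0 n) ltnW.
have hV : ((2 * L * L) `^ al * (m%:R : R) `^ al)^-1 <= ((n%:R : R) ^+ a.+1)^-1.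
  by rewrite lef_pV2 ?posrE // mulr_gt0.
have -> : ((2 * L * L) `^ al)^-1 / 2 / (m%:R : R) `^ al
   = ((2 * L * L) `^ al * (m%:R : R) `^ al)^-1 * (1 / 2).
  by field; apply/andP; split; rewrite gt_eqF.
apply: ler_pM => //.
  by rewrite invr_ge0 ltW // mulr_gt0.
Qed.

Lemma upper_pt {R : realType} (L N : R) m k j i : 1 < L -> 0 < N -> (0 < i)%N ->
  (k * j <= m)%N -> (0 < k)%N ->
  ((N ^+ i)^-1 * (1 - (L - 1) / (L ^+ i - 1)) ^+ m <= (N ^+ i)^-1) /\
  ((N ^+ i)^-1 * (1 - (L - 1) / (L ^+ i - 1)) ^+ m
     <= (L ^+ j / N) ^+ i / (k%:R * (L - 1)) ^+ j).
Proof.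
move=> hL hN hi hkj hk.
have [hx0 hx1 hx2] := @x_bounds _ L i hL hi.
move: hx0 hx1 hx2; set x := (L - 1) / (L ^+ i - 1) => hx0 hx1 hx2.
have hNi : 0 < N ^+ i by apply: exprn_gt0.
have hNi' : 0 <= (N ^+ i)^-1 by rewrite invr_ge0 ltW.
split.
  apply: ler_piMr => //; apply: exprn_ile1; lra.
have hq : (1 - x) ^+ m * (1 + x) ^+ m <= 1.
  rewrite -exprMn; apply: exprn_ile1; nra.
have hkR : 0 < (k%:R : R) by rewrite (ltr_nat R 0 k).
have h1x : (k%:R * x) ^+ j <= (1 + x) ^+ m.
  apply: le_trans (_ : (1 + x) ^+ (k * j) <= _); last first.
    by apply: ler_weXn2l => //; lra.
  rewrite exprM; apply: lerXn2r; rewrite ?nnegrE; [nra| |].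
    by apply: exprn_ge0; lra.
  apply: le_trans (@bern _ x k _); lra.
have hLi : 0 < L ^+ i by apply: exprn_gt0; lra.
have hD : 0 < (k%:R * (L - 1)) ^+ j by apply: exprn_gt0; nra.
have hY : 0 < (L ^+ i) ^+ j by apply: exprn_gt0.
have hE : (k%:R * (L - 1)) ^+ j / (L ^+ i) ^+ j <= (1 + x) ^+ m.
  apply: le_trans h1x; rewrite -expr_div_n; apply: lerXn2r; rewrite ?nnegrE.
  - by apply: divr_ge0; nra.
  - nra.
  rewrite -mulrA; apply: ler_wpM2l; lra.
have hA0 : 0 <= (1 - x) ^+ m by apply: exprn_ge0; lra.
have hE0 : 0 < (k%:R * (L - 1)) ^+ j / (L ^+ i) ^+ j by apply: divr_gt0.
have hA : (1 - x) ^+ m <= (L ^+ i) ^+ j / (k%:R * (L - 1)) ^+ j.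
  rewrite -invf_div -[X in _ <= X]mul1r ler_pdivlMr //.
  apply: le_trans hq; apply: ler_wpM2l => //.
rewrite expr_div_n -exprAC.
rewrite [X in _ <= X]mulrAC [X in _ <= X]mulrC.
by apply: ler_wpM2l.
Qed.

Lemma split_tail {R : realType} (g : nat -> R) a0 M : (forall i, 0 <= g i) ->
  \sum_(1 <= i < M) g i <= \sum_(0 <= i < a0) g i + \sum_(a0 <= i < a0 + M) g i.
Proof.
move=> hg0.
have e1 : \sum_(0 <= i < a0 + M) g i = \sum_(0 <= i < a0) g i + \sum_(a0 <= i < a0 + M) g i.
  exact: big_cat_nat (leq0n _) (leq_addr _ _).
rewrite -e1.
case: M e1 => [|M] e1; first by rewrite [X in X <= _]big_geq //; apply: sumr_ge0.
have e2 : \sum_(0 <= i < a0 + M.+1) g i = g 0%N + \sum_(1 <= i < a0 + M.+1) g i.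
  by rewrite big_ltn // addnS.
have e3 : \sum_(1 <= i < a0 + M.+1) g i = \sum_(1 <= i < M.+1) g i + \sum_(M.+1 <= i < a0 + M.+1) g i.
  exact: big_cat_nat (ltn0Sn _) (leq_addl _ _).
have s0 : 0 <= \sum_(M.+1 <= i < a0 + M.+1) g i by apply: sumr_ge0.
have := hg0 0%N; lra.
Qed.

Lemma upper_partial {R : realType} n (p : R) : (1 < n)%N -> 1 / 2 < p -> p < 1 ->
  forall j, (0 < j)%N -> (n%:R : R) < lam p ^+ j ->
  forall m, (2 * j <= m)%N -> forall M,
  \sum_(1 <= i < M) summand n p m i <=
   (n%:R * ((2 * j%:R / (lam p - 1)) ^+ j / (lam p ^+ j / n%:R - 1) + 2))
     / (m%:R `^ alpha n p).
Proof.
move=> hn h1 h2 j hj0 hj m hjm M.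
have hpa := @pow_alpha _ n p hn h1 h2.
have hal := @alpha_gt0 _ n p hn h1 h2.
have hL := L_gt1 h1 h2.
move: hpa hal hL hj; set L := lam p; set al := alpha n p; set N : R := n%:R.
move=> hpa hal hL hj.
have hN : 2 <= N by rewrite /N (ler_nat R 2 n).
set k := (m %/ j)%N.
have hkj : (k * j <= m)%N by apply: leq_trunc_div.
have hm2 : (m <= 2 * (k * j))%N.
  have := ltn_ceil m hj0; rewrite -/k mulSn; lia.
have hk : (0 < k)%N by case: k hm2 hkj => //; lia.
have hmR : 1 <= (m%:R : R) by rewrite (ler_nat R 1 m); lia.
have [a0 /andP[ha1 ha2]] := @exists_pow _ L m%:R hL hmR.
set r := L ^+ j / N.
have hr : 1 < r by rewrite /r ltr_pdivlMr; lra.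
set D := (k%:R * (L - 1)) ^+ j.
have hkR : 0 < (k%:R : R) by rewrite (ltr_nat R 0 k).
have hD : 0 < D by apply: exprn_gt0; nra.
pose g i := if (i < a0)%N then r ^+ i / D else (N ^+ i)^-1.
have hg0 : forall i, 0 <= g i.
  move=> i; rewrite /g; case: ifP => _.
    apply: divr_ge0; [apply: exprn_ge0; lra | lra].
  by rewrite invr_ge0; apply: exprn_ge0; lra.
have hsg : forall i, (0 < i)%N -> summand n p m i <= g i.
  move=> i hi; have [u1 u2] := @upper_pt _ L N m k j i hL ltac:(lra) hi hkj hk.
  by rewrite /summand /g; case: ifP.
have step1 : \sum_(1 <= i < M) summand n p m i <= \sum_(1 <= i < M) g i.
  by apply: ler_sum_nat => i /andP[hi _]; apply: hsg.
apply: le_trans step1 _.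
apply: le_trans (@split_tail _ g a0 M hg0) _.
have e1 : \sum_(0 <= i < a0) g i = (\sum_(0 <= i < a0) r ^+ i) / D.
  rewrite mulr_suml; apply: eq_big_nat => i /andP[_ hi]; by rewrite /g hi.
have e2 : \sum_(a0 <= i < a0 + M) g i = \sum_(a0 <= i < a0 + M) (N^-1) ^+ i.
  apply: eq_big_nat => i /andP[hi _]; by rewrite /g ltnNge hi /= exprVn.
rewrite e1 e2.
have G1 := @geom_sum _ r 0 a0 ltac:(rewrite gt_eqF //).
rewrite add0n expr0 mul1r in G1.
have hNi : N^-1 != 1 by rewrite invr_eq1 gt_eqF //; lra.
have G2 := @geom_sum _ (N^-1) a0 M hNi.
rewrite G1 G2.
set w := N^-1 ^+ a0.
have hN0 : 0 < N by lra.
have hNa : 0 < N ^+ a0 by apply: exprn_gt0.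
have hw : w * N ^+ a0 = 1 by rewrite /w exprVn mulVf // gt_eqF.
have hw0 : 0 < w by rewrite /w exprVn invr_gt0.
set Q := m%:R `^ al.
have hQ : 0 < Q by apply: powR_gt0; lra.
have F3 : w <= N / Q.
  have hQN : Q <= N * N ^+ a0.
    rewrite -exprS hpa; apply: ge0_ler_powR; rewrite ?nnegrE; try lra.
  rewrite ler_pdivlMr //; nra.
set u := N^-1 ^+ M.
have hrho : 0 < N^-1 <= 1 / 2.
  apply/andP; split; first by rewrite invr_gt0.
  rewrite -div1r ler_pdivrMr //; lra.
have hu : 0 <= u <= 1.
  by rewrite /u exprn_ge0 ?exprn_ile1 //; lra.
have S2 : w * (u - 1) / (N^-1 - 1) <= 2 * w.
  rewrite ler_ndivrMr; last lra.
  nra.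
set T := (2 * j%:R / (L - 1)) ^+ j.
have F1 : r ^+ a0 = (L ^+ a0) ^+ j * w.
  by rewrite /r expr_div_n -exprM mulnC exprM /w exprVn.
have hm2R : (m%:R : R) <= 2 * j%:R * k%:R.
  have := hm2; rewrite -(ler_nat R) natrM natrM; lra.
have hjR : 0 <= (j%:R : R) by [].
have F2 : (L ^+ a0) ^+ j <= T * D.
  rewrite /T /D -exprMn; apply: lerXn2r; rewrite ?nnegrE.
  - by apply: exprn_ge0; lra.
  - apply: mulr_ge0; [apply: divr_ge0 | nra]; lra.
  have -> : 2 * j%:R / (L - 1) * (k%:R * (L - 1)) = 2 * j%:R * k%:R.
    by field; rewrite gt_eqF //; lra.
  lra.
have hT : 0 <= T by apply: exprn_ge0; apply: divr_ge0; lra.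
have S1 : (r ^+ a0 - 1) / (r - 1) / D <= T / (r - 1) * w.
  rewrite ler_pdivrMr // ler_pdivrMr; last lra.
  have -> : T / (r - 1) * w * D * (r - 1) = T * D * w.
    by field; rewrite gt_eqF //; lra.
  rewrite F1; nra.
have -> : N * (T / (r - 1) + 2) / Q = (T / (r - 1) + 2) * (N / Q).
  by rewrite mulrCA mulrA.
have hE : 0 <= T / (r - 1) by apply: divr_ge0; lra.
have : (T / (r - 1) + 2) * w <= (T / (r - 1) + 2) * (N / Q).
  by apply: ler_wpM2l => //; lra.
lra.
Qed.

Lemma summand_ge0 {R : realType} n (p : R) m i : 1 / 2 < p -> p < 1 -> (0 < i)%N ->
  0 <= summand n p m i.
Proof.
move=> h1 h2 hi; have hL := L_gt1 h1 h2.
have [_ _ hx] := @x_bounds _ (lam p) i hL hi.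
rewrite /summand; apply: mulr_ge0.
  by rewrite invr_ge0 exprn_ge0.
by apply: exprn_ge0; lra.
Qed.

Theorem lemma2p5 (R : realType) (gT : finGroupType) (F : {group gT})
    (hF : (1 < #|F|)%N) (p : R) (hp1 : 1 / 2 < p) (hp2 : p < 1) :
  exists (m0 : nat) (c C : R), 0 < c /\ c <= C /\
    forall m : nat, (m0 <= m)%N ->
      ((c / (m%:R `^ alpha #|F| p))%:E
         <= \sum_(1 <= a <oo) (summand #|F| p m a)%:E)%E /\
      (\sum_(1 <= a <oo) (summand #|F| p m a)%:E
         <= (C / (m%:R `^ alpha #|F| p))%:E)%E.
Proof.
move: hF; set n := #|F| => hn.
have hL := L_gt1 hp1 hp2.
have hal := @alpha_gt0 _ n p hn hp1 hp2.
have hN : 1 <= (n%:R : R) by rewrite (ler_nat R 1 n) ltnW.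
have [j0 /andP[_ hj]] := @exists_pow _ (lam p) n%:R hL hN.
set j := j0.+1.
set c := ((2 * lam p * lam p) `^ alpha n p)^-1 / 2.
set C0 := n%:R * ((2 * j%:R / (lam p - 1)) ^+ j / (lam p ^+ j / n%:R - 1) + 2).
have hc : 0 < c.
  rewrite /c; apply: divr_gt0 => //; rewrite invr_gt0; apply: powR_gt0; nra.
have hC0 : 0 <= C0.
  rewrite /C0; apply: mulr_ge0 => //; apply: addr_ge0 => //.
  apply: divr_ge0; first by apply: exprn_ge0; apply: divr_ge0 => //; lra.
  have : 1 < lam p ^+ j / n%:R by rewrite ltr_pdivlMr; lra.
  lra.
exists (2 * j)%N, c, (c + C0); split => //; split; first lra.
move=> m hm.
have hm0 : (0 < m)%N by rewrite /j in hm; lia.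
have hQ : 0 < (m%:R : R) `^ alpha n p by apply: powR_gt0; rewrite (ltr_nat R 0 m).
have hge0 : forall i, (1 <= i)%N -> true -> (0 <= (summand n p m i)%:E)%E.
  by move=> i hi _; rewrite lee_fin; apply: summand_ge0.
split.
  have [b [hb hcb]] := @lower_term _ n p hn hp1 hp2 m hm0.
  apply: le_trans (nneseries_lim_ge b.+1 hge0).
  rewrite sumEFin lee_fin.
  have -> : \sum_(1 <= i < b.+1) summand n p m i
      = \sum_(1 <= i < b) summand n p m i + summand n p m b by rewrite big_nat_recr.
  have : 0 <= \sum_(1 <= i < b) summand n p m i.
    by rewrite big_nat_cond; apply: sumr_ge0 => i /andP[/andP[hi _] _]; apply: summand_ge0.
  move=> hs; apply: le_trans hcb _; lra.
apply: lime_le; first exact: is_cvg_nneseries hge0.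
apply: nearW => M; rewrite sumEFin lee_fin.
apply: le_trans (@upper_partial _ n p hn hp1 hp2 j (ltn0Sn _) hj m hm M) _.
rewrite -/C0 ler_pdivrMr // divfK; first lra.
by rewrite gt_eqF.
Qed.
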